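(* Let $\beta:\mathbb R\to\mathbb R$ be piecewise continuous with $\beta(-t)^2=\beta(t)^2$ for all $t$, let $\Lambda(t)=\begin{pmatrix}0&1\\-\beta(t)^2&0\end{pmatrix}$, let $b(t,s)$ solve $\frac{\partial}{\partial t}b(t,s)=\Lambda(t)b(t,s)$, $b(s,s)=\mathbb 1$, and set $b(t)=b(t,-t)$ with entries $b_{ij}(t)$. If $|\mathrm{Tr}\,b(t)|>2$ for some $t\ge0$, then $b_{12}(t)\neq0$ and $b_{21}(t)\neq0$. *)

(* Defs.v *)
From HB Require Import structures.
From mathcomp Require Import all_boot all_order all_algebra.
From mathcomp Require Import all_classical all_reals all_analysis.
Set Implicit Arguments. Unset Strict Implicit. Unset Printing Implicit Defensive.
Import Order.TTheory GRing.Theory Num.Theory.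
Import numFieldNormedType.Exports.
Local Open Scope classical_set_scope.
Local Open Scope ring_scope.

Definition piecewise_continuous {R : realType} (f : R -> R) : Prop :=
  forall a c : R, a <= c ->
    exists s : seq R,
      (forall x, a <= x <= c -> x \notin s -> {for x, continuous f}) /\
      (forall x, x \in s ->
         (exists l : R, f y @[y --> x^'-] --> l) /\
         (exists l : R, f y @[y --> x^'+] --> l)).

Definition Lambda {R : realType} (beta : R -> R) (t : R) : 'M[R]_2 :=
  \matrix_(i < 2, j < 2)
    (if i == 0 :> nat then (if j == 0 :> nat then 0 else 1)
     else (if j == 0 :> nat then - (beta t ^+ 2) else 0)).

(* b is the propagator of  d/dt b(t,s) = Lambda(t) b(t,s),  b(s,s) = 1.
   Since beta is only piecewise continuous, the solution is continuous in t
   everywhere and satisfies the ODE at every t where beta is continuous. *)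
Definition is_propagator {R : realType} (beta : R -> R) (b : R -> R -> 'M[R]_2) : Prop :=
  forall s : R,
    b s s = 1%:M /\
    (forall t : R, {for t, continuous (fun u => b u s)}) /\
    (forall t : R, {for t, continuous beta} ->
       is_derive t 1 (fun u => b u s) (Lambda beta t *m b t s)).

(* Main.v *)
From HB Require Import structures.
From mathcomp Require Import all_boot all_order all_algebra.
From mathcomp Require Import all_classical all_reals all_analysis.
From mathcomp Require Import ring lra.
Require Import Defs.
Import Order.TTheory GRing.Theory Num.Theory.
Import numFieldNormedType.Exports.
Local Open Scope classical_set_scope.
Local Open Scope ring_scope.

Lemma is_derive_entry (R : realType) (F : R -> 'M[R]_2) (x : R) (M : 'M[R]_2) i j :
  is_derive x 1 F M -> is_derive x 1 (fun u => F u i j) (M i j).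
Proof.
move=> [dF vF].
have cq : (fun h : R => h^-1 *: ((F \o shift x) (h *: 1) - F x)) @ 0^' --> M.
  by rewrite -vF; apply: dF.
have ce : (fun h : R => (h^-1 *: ((F \o shift x) (h *: 1) - F x)) i j) @ 0^' --> M i j.
  exact: (continuous_cvg _ (@coord_continuous R 2 2 i j M)).
have ce' : (fun h : R => h^-1 *: (((fun u => F u i j) \o shift x) (h *: 1) - F x i j)) @ 0^' --> M i j.
  have E : (fun h : R => (h^-1 *: ((F \o shift x) (h *: 1) - F x)) i j) =1
    (fun h : R => h^-1 *: (((fun u => F u i j) \o shift x) (h *: 1) - F x i j)).
    by move=> h; rewrite !mxE.
  by rewrite -(eq_cvg _ _ E).
split; first by apply/cvg_ex; exists (M i j).
exact: cvg_lim ce'.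
Qed.

Lemma is_derive_neg (R : realType) (f : R -> R) (x d : R) :
  is_derive (- x) 1 f d -> is_derive x 1 (fun u => f (- u)) (- d).
Proof.
move=> [df vf].
have dN : derivable (-%R : R -> R) x 1 by apply: ex_derive.
have dc : derivable (f \o -%R) x 1.
  apply/derivable1_diffP; apply: differentiable_comp.
    exact/derivable1_diffP.
  exact/derivable1_diffP.
split; first exact: dc.
rewrite -derive1E (derive1_comp dN) //.
rewrite !derive1E vf.
have -> : 'D_1 (-%R) x = -1 :> R by apply: derive_val.
by rewrite mulrN1.
Qed.
Lemma const_seq (R : realType) (f : R -> R) (s : seq R) :
  continuous f -> forall a c, a <= c ->
  (forall x, a < x < c -> x \notin s -> is_derive x 1 f 0) -> f a = f c.
Proof.
move=> cf; elim: s => [|y s IH] a c ac hd.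
  have [z _ ] : exists2 z, z \in `[a, c] & f c - f a = (fun=> 0) z * (c - a).
    apply: MVT_segment => //; last exact: continuous_subspaceT.
    by move=> x; rewrite in_itv /= => xin; apply: hd.
  by rewrite mul0r => /eqP; rewrite subr_eq0 => /eqP ->.
have [yin|ynin] := boolP (a < y < c).
  case/andP: yin => ay yc.
  have -> : f a = f y.
    apply: (IH a y (ltW ay)) =>  x /andP[ax xy] xs; apply: hd; first by rewrite ax (lt_trans xy yc).
    by rewrite inE negb_or xs andbT; rewrite lt_eqF.
  apply: IH (ltW yc) _ => x /andP[yx xc] xs; apply: hd; first by rewrite xc (lt_trans ay yx).
  by rewrite inE negb_or xs andbT; rewrite gt_eqF.
apply: IH ac _ => x xin xs; apply: hd => //.
rewrite inE negb_or xs andbT; apply/eqP => exy; move: ynin; by rewrite -exy xin.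
Qed.
Lemma wronsk (R : realType) (k p q r w : R -> R) :
  continuous p -> continuous q -> continuous r -> continuous w ->
  (forall a c, a <= c -> exists s : seq R, forall x, a < x < c -> x \notin s ->
   [/\ is_derive x 1 p (q x), is_derive x 1 q (- (k x * p x)),
       is_derive x 1 r (w x) & is_derive x 1 w (- (k x * r x))]) ->
  forall a c, a <= c -> p a * w a - q a * r a = p c * w c - q c * r c.
Proof.
move=> cp cq cr cw hd a c ac.
have [s hs] := hd a c ac.
have cW : continuous (p * w - q * r).
  move=> x; apply: cvgB; apply: cvgM; [exact: cp|exact: cw|exact: cq|exact: cr].
have := @const_seq R (p * w - q * r) s cW a c ac.
apply=> x xin xs; have [dp dq dr dw] := hs x xin xs.
apply: is_derive_eq.
rewrite /GRing.scale /=.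
ring.
Qed.

Lemma Lambda_mulE (R : realType) (beta : R -> R) (u : R) (B : 'M[R]_2) j :
  (Lambda beta u *m B) 0 j = B 1 j /\
  (Lambda beta u *m B) 1 j = - (beta u ^+ 2 * B 0 j).
Proof.
rewrite !mxE !big_ord_recl !big_ord0 !mxE /=.
rewrite (_ : lift ord0 ord0 = 1 :> 'I_2); last exact/val_inj.
by rewrite !mul0r !addr0 add0r mul1r mulNr.
Qed.

Lemma cont_entry (R : realType) (F : R -> 'M[R]_2) i j :
  (forall t, {for t, continuous F}) -> continuous (fun u => F u i j).
Proof.
move=> cF u.
exact: (@continuous_comp _ _ _ F (fun M : 'M[R]_2 => M i j) u (cF u)
  (@coord_continuous R 2 2 i j (F u))).
Qed.

Lemma cont_negf (R : realType) (f : R -> R) : continuous f -> continuous (fun u => f (- u)).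
Proof.
move=> cf u.
exact: (@continuous_comp _ _ _ -%R f u (@opp_continuous R u) (cf (- u))).
Qed.

Theorem mainTheorem5 (R : realType) (beta : R -> R) (b : R -> R -> 'M[R]_2)
  (hpc : piecewise_continuous beta)
  (heven : forall t : R, beta (- t) ^+ 2 = beta t ^+ 2)
  (hb : is_propagator beta b)
  (t : R) (ht : 0 <= t)
  (htr : 2 < `|\tr (b t (- t))|) :
  b t (- t) 0 1 != 0 /\ b t (- t) 1 0 != 0.
Proof.
have ce s i j : continuous (fun u => b u s i j).
  by apply: cont_entry => u; case: (hb s) => _ [] .
have de s j x : {for x, continuous beta} ->
    is_derive x 1 (fun u => b u s 0 j) (b x s 1 j) /\
    is_derive x 1 (fun u => b u s 1 j) (- (beta x ^+ 2 * b x s 0 j)).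
  move=> cx; have [_ [_ D]] := hb s; have := D x cx.
  have [E0 E1] := Lambda_mulE _ beta x (b x s) j.
  move=> Dx; split.
    by rewrite -E0; apply: is_derive_entry.
  by rewrite -E1; apply: is_derive_entry.
have hex a c : a <= c -> exists s : seq R, forall x, a < x < c -> x \notin s ->
    {for x, continuous beta} /\ {for (- x), continuous beta}.
  move=> ac; have [s1 [h1 _]] := hpc a c ac.
  have [s2 [h2 _]] := hpc (- c) (- a) ltac:(by rewrite lerN2).
  exists (s1 ++ map -%R s2) => x /andP[ax xc]; rewrite mem_cat negb_or => /andP[xs1 xs2].
  split; first by apply: h1 => //; rewrite !ltW.
  apply: h2; first by rewrite !lerN2 !ltW.
  by apply: contra xs2 => xs; rewrite -[x]opprK; apply: map_f.
have tt : - t <= t by rewrite -subr_ge0 opprK -mulr2n mulrn_wge0.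
have WA i j : b (- t) t 0 i * b (- t) (- t) 1 j - b (- t) t 1 i * b (- t) (- t) 0 j =
              b t t 0 i * b t (- t) 1 j - b t t 1 i * b t (- t) 0 j.
  apply: (@wronsk R (fun u => beta u ^+ 2) (fun u => b u t 0 i) (fun u => b u t 1 i)
    (fun u => b u (- t) 0 j) (fun u => b u (- t) 1 j)) => //.
  move=> a c ac; have [s hs] := hex a c ac; exists s => x xin xs.
  have [cx _] := hs x xin xs.
  have [d1 d2] := de t i x cx; have [d3 d4] := de (- t) j x cx.
  by split.
have WB i j : b t t 0 i * b (- t) (- t) 1 j - (- b t t 1 i) * b (- t) (- t) 0 j =
              b (- t) t 0 i * b t (- t) 1 j - (- b (- t) t 1 i) * b t (- t) 0 j.
  have hd : forall a c, a <= c -> exists s : seq R, forall x, a < x < c -> x \notin s ->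
   [/\ is_derive x 1 (fun u => b (- u) t 0 i) (- b (- x) t 1 i),
       is_derive x 1 (fun u => - b (- u) t 1 i) (- (beta x ^+ 2 * b (- x) t 0 i)),
       is_derive x 1 (fun u => b u (- t) 0 j) (b x (- t) 1 j) &
       is_derive x 1 (fun u => b u (- t) 1 j) (- (beta x ^+ 2 * b x (- t) 0 j))].
    move=> a c ac; have [s hs] := hex a c ac; exists s => x xin xs.
    have [cx cnx] := hs x xin xs.
    have [d1 d2] := de t i (- x) cnx; have [d3 d4] := de (- t) j x cx.
    split => //.
    - exact: is_derive_neg.
    - apply: is_derive_eq; first exact/is_deriveN/is_derive_neg.
      by rewrite heven !opprK.
  have := @wronsk R (fun u => beta u ^+ 2) _ _ _ _ (cont_negf _ _ (ce t 0 i))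
    (fun x => continuousN (cont_negf _ _ (ce t 1 i) x))
    (ce (- t) 0 j) (ce (- t) 1 j) hd _ _ tt.
  by rewrite /= !opprK.
have I s i j : b s s i j = (i == j)%:R by case: (hb s) => -> _; rewrite mxE.
move: (WA 0 0) (WA 0 1) (WA 1 0) (WA 1 1) (WB 0 0) (WB 0 1) (WB 1 0) (WB 1 1).
rewrite !I /=.
move: htr; rewrite /mxtrace !big_ord_recl big_ord0 /=.
rewrite (_ : lift ord0 ord0 = 1 :> 'I_2); last exact/val_inj.
rewrite addr0.
set m00 := b t (- t) 0 0; set m01 := b t (- t) 0 1; set m10 := b t (- t) 1 0;
  set m11 := b t (- t) 1 1.
set n00 := b (- t) t 0 0; set n01 := b (- t) t 0 1; set n10 := b (- t) t 1 0;
  set n11 := b (- t) t 1 1.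
move=> hT e1 e2 e3 e4 f1 f2 f3 f4.
have hT2 : 4 < (m00 + m11) ^+ 2.
  move: hT; rewrite ltr_normr => /orP[] h; nra.
rewrite !(mul0r, mulr0, mul1r, mulr1, subr0, sub0r, oppr0, opprK) in e1 e2 e3 e4 f1 f2 f3 f4.
have En10 : n10 = - m10 by rewrite -e1 opprK.
have En11 : n11 = m00 by apply: oppr_inj.
have En01 : n01 = - m01 by [].
rewrite En10 En11 En01 e2 in f1 f2 f3 f4.
have sq : forall x y : R, x ^+ 2 = 1 -> y ^+ 2 = 1 -> (x + y) ^+ 2 <= 4.
  move=> x y hx hy; nra.
split; apply/eqP => h0.
- have h1 : m00 ^+ 2 = 1 by rewrite [RHS]f3 h0; ring.
  have h2 : m11 ^+ 2 = 1 by rewrite [RHS]f2 h0; ring.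
  by have := sq _ _ h1 h2; rewrite leNgt hT2.
- have h1 : m00 ^+ 2 = 1 by rewrite [RHS]f3 h0; ring.
  have h2 : m11 ^+ 2 = 1 by rewrite [RHS]f2 h0; ring.
  by have := sq _ _ h1 h2; rewrite leNgt hT2.
Qed.
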